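(* Let $X,Y$ be metric spaces and $n\ge1$, and let $f:X\multimap Y$ be a $\{1,n\}$-valued map. Then there is a continuous map $g:X\to\mathit{SP}^n(Y)$ with $u\circ g=f$; namely $g(x)=[y,\dots,y]$ if $f(x)=\{y\}$ and $g(x)=[y_1,\dots,y_n]$ if $f(x)=\{y_1,\dots,y_n\}$.
   Context: An at-most-$n$-valued map $f:X\multimap Y$ is a lower and upper semicontinuous multivalued map whose values are nonempty sets of cardinality at most $n$; it is $\{1,n\}$-valued if $\#f(x)\in\{1,n\}$ for every $x$. $\mathit{SP}^n(Y)$ is the quotient of $Y^n$ by the symmetric group permuting coordinates, with elements $[y_1,\dots,y_n]$; $u:\mathit{SP}^n(Y)\to C_n(Y)$, $u([y_1,\dots,y_n])=\{y_1,\dots,y_n\}$, with $C_n(Y)$ the space of nonempty subsets of cardinality at most $n$ (quotient topology from $Y^n$). *)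

(* Defs.v *)
From HB Require Import structures.
From mathcomp Require Import all_boot all_order all_algebra generic_quotient fingroup perm.
From mathcomp Require Import all_classical all_reals all_analysis.
Set Implicit Arguments. Unset Strict Implicit. Unset Printing Implicit Defensive.
Import Order.TTheory GRing.Theory Num.Theory.
Local Open Scope classical_set_scope.
Local Open Scope card_scope.

Definition Ypow (n : nat) (Y : topologicalType) := {ptws 'I_n -> Y}.

Definition perm_rel (n : nat) (Y : topologicalType) : rel (Ypow n Y) :=
  fun a b => `[< exists s : 'S_n, forall i, a i = b (s i) >].

Lemma perm_rel_refl n Y : reflexive (@perm_rel n Y).
Proof. by move=> a; apply/asboolP; exists 1%g => i; rewrite perm1. Qed.

Lemma perm_rel_sym n Y : symmetric (@perm_rel n Y).
Proof.
suff H : forall a b, perm_rel a b -> @perm_rel n Y b a.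
  by move=> a b; apply/idP/idP; apply: H.
move=> a b /asboolP [s Hs]; apply/asboolP; exists (s^-1)%g => i.
by rewrite Hs permKV.
Qed.

Lemma perm_rel_trans n Y : transitive (@perm_rel n Y).
Proof.
move=> b a c /asboolP [s Hs] /asboolP [t Ht]; apply/asboolP.
exists (s * t)%g => i; by rewrite Hs Ht permM.
Qed.

Canonical perm_equiv n Y :=
  EquivRel (@perm_rel n Y) (@perm_rel_refl n Y) (@perm_rel_sym n Y)
    (@perm_rel_trans n Y).

Definition SP (n : nat) (Y : topologicalType) : topologicalType :=
  quotient_topology {eq_quot (@perm_rel n Y)}%qT.

Definition sp_class (n : nat) (Y : topologicalType) (y : 'I_n -> Y) : SP n Y :=
  (\pi_(SP n Y) (y : Ypow n Y))%qT.

Definition u_map (n : nat) (Y : topologicalType) (q : SP n Y) : set Y :=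
  [set y | exists i : 'I_n, (generic_quotient.repr (q : {eq_quot (@perm_rel n Y)}%qT) : Ypow n Y) i = y].

Definition lsc_mv (X Y : topologicalType) (f : X -> set Y) :=
  forall V : set Y, open V -> open [set x | f x `&` V !=set0].
Definition usc_mv (X Y : topologicalType) (f : X -> set Y) :=
  forall V : set Y, open V -> open [set x | f x `<=` V].

Definition one_n_valued (n : nat) (X Y : topologicalType) (f : X -> set Y) :=
  [/\ lsc_mv f, usc_mv f & forall x, f x #= `I_1 \/ f x #= `I_n].

(* Main.v *)
Require Import Defs.
From HB Require Import structures.
From mathcomp Require Import all_boot all_order all_algebra generic_quotient fingroup perm.
From mathcomp Require Import all_classical all_reals all_analysis.
Set Implicit Arguments. Unset Strict Implicit. Unset Printing Implicit Defensive.
Import Order.TTheory GRing.Theory Num.Theory.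
Local Open Scope classical_set_scope.
Local Open Scope ring_scope.
Local Open Scope card_scope.

Section S.
Variables (R : realType) (Y : metricType R) (n : nat).

Definition bfam (p : Ypow n Y) (r : R) : set (Ypow n Y) :=
  [set z | forall i, ball (p i) r (z i)].

Lemma ptws_ball (O : set (Ypow n Y)) (p : Ypow n Y) : open O -> O p ->
  exists2 r : R, 0 < r & bfam p r `<=` O.
Proof.
move=> oO Op.
pose F := filter_from [set r : R | 0 < r] (bfam p).
have FF : Filter F.
  apply: filter_from_filter; first by exists 1; rewrite /= ltr01.
  move=> i j i0 j0; exists (Num.min i j); first by rewrite /= lt_min i0.
  move=> z Hz; split => k; apply: (le_ball _ (Hz k)); rewrite ge_min lexx ?orbT //.
have : F --> p.
  apply/cvg_sup => i A.
  rewrite nbhsE => -[B [oB Bp] BA].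
  case: oB => C oC CB.
  have Cpi : C (p i) by rewrite -CB in Bp.
  have /nbhs_ballP [r r0 rC] : nbhs (p i) C by apply: open_nbhs_nbhs.
  rewrite nbhs_filterE; exists r => // z Hz; apply: BA; rewrite -CB; exact: rC (Hz i).
move=> /(_ O); rewrite nbhs_filterE => - [|r r0 rO]; last by exists r.
by apply: open_nbhs_nbhs.
Qed.


Lemma sp_class_eq (a b : 'I_n -> Y) : perm_rel (a : Ypow n Y) b -> sp_class a = sp_class b.
Proof. by move=> h; apply/eqquotP. Qed.

Lemma sp_class_rel (a b : 'I_n -> Y) : sp_class a = sp_class b -> perm_rel (a : Ypow n Y) b.
Proof. by move/eqquotP. Qed.

Lemma perm_rel_range (a b : Ypow n Y) : perm_rel a b -> range a = range b.
Proof.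
move=> /asboolP [s Hs]; apply/seteqP; split => _ [i _ <-].
  by exists (s i) => //; rewrite Hs.
by exists ((s^-1)%g i) => //; rewrite Hs permKV.
Qed.

Lemma u_map_sp (a : 'I_n -> Y) : u_map (sp_class a) = range a.
Proof.
have h : perm_rel (generic_quotient.repr (sp_class a : {eq_quot (@perm_rel n Y)}%qT) : Ypow n Y) a.
  by apply/(eqquotP {eq_quot (@perm_rel n Y)}%qT); exact: reprK.
rewrite -(perm_rel_range h); apply/seteqP; split => y.
  by case=> i <-; exists i.
by case=> i _ <-; exists i.
Qed.

Lemma inj_perm_rel (a b : Ypow n Y) (s : 'I_n -> 'I_n) : injective s ->
  (forall i, a i = b (s i)) -> perm_rel a b.
Proof. by move=> sinj h; apply/asboolP; exists (perm sinj) => i; rewrite permE. Qed.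

Lemma range_perm (a b : 'I_n -> Y) : injective a -> range a = range b ->
  perm_rel (a : Ypow n Y) b.
Proof.
move=> ainj eab.
have h : forall i, exists j, b j = a i.
  move=> i; have : range b (a i) by rewrite -eab; exists i.
  by case=> j _ ?; exists j.
have [s Hs] := choice h.
apply: (@inj_perm_rel _ _ s) => [i j sij|i]; last by rewrite Hs.
by apply: ainj; rewrite -Hs sij Hs.
Qed.

Lemma card_range_inj (a : 'I_n -> Y) : range a #= `I_n -> injective a.
Proof.
move=> /card_set_bijP [h [hf hinj hsurj]].
have H : forall k : 'I_n, exists i : 'I_n, h (a i) = k.
  move=> k; have : `I_n (val k) by rewrite /= ltn_ord.
  by move/hsurj => [_ [i _ <-] hk]; exists i.
have [c Hc] := choice H.
have cinj : injective c by move=> k k' e; apply: ord_inj; rewrite -(Hc k) -(Hc k') e.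
have [c' cc' c'c] := injF_bij cinj.
move=> i j aij.
have Ei : h (a i) = c' i by rewrite -{1}(c'c i) Hc.
have Ej : h (a j) = c' j by rewrite -{1}(c'c j) Hc.
have : c' i = c' j by apply: ord_inj; rewrite -Ei -Ej aij.
by move/(congr1 c); rewrite !c'c.
Qed.

Lemma card1_single (A : set Y) : A #= `I_1 -> exists y, A = [set y].
Proof.
move=> /card_set_bijP [h [hf hinj hsurj]].
have : `I_1 0%N by [].
move/hsurj => [y Ay hy]; exists y; apply/seteqP; split => z; last by move=> ->.
move=> Az; apply: hinj; rewrite ?inE //.
by have := hf _ Az; rewrite hy /=; case: (h z).
Qed.

Lemma card_n_tuple (A : set Y) : A #= `I_n -> exists t : 'I_n -> Y, range t = A.
Proof.
move=> /card_set_bijP [h [hf hinj hsurj]].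
have H : forall k : 'I_n, exists y, A y /\ h y = k.
  move=> k; have : `I_n (val k) by rewrite /= ltn_ord.
  by move/hsurj => [y Ay hy]; exists y.
have [t Ht] := choice H; exists t; apply/seteqP; split => y.
  by case=> k _ <-; case: (Ht k).
move=> Ay; have hyn : (h y < n)%N by apply: hf.
exists (Ordinal hyn) => //; apply: hinj; rewrite ?inE //; first by case: (Ht (Ordinal hyn)).
by case: (Ht (Ordinal hyn)) => _ ->.
Qed.
End S.

Theorem mainTheorem14 (R : realType) (X Y : metricType R) (n : nat)
  (f : X -> set Y) :
  (0 < n)%N -> one_n_valued n f ->
  exists g : X -> SP n Y,
    [/\ continuous g,
        (forall x, u_map (g x) = f x),
        (forall x (y : Y), f x = [set y] -> g x = sp_class (fun _ : 'I_n => y))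
      & (forall x (y : 'I_n -> Y), f x #= `I_n -> f x = range y ->
           g x = sp_class y)].
Proof.
move=> n0 [lsc usc fcard].
have H : forall x, exists t : 'I_n -> Y, range t = f x.
  move=> x; case: (fcard x) => [/card1_single [y ->]|/card_n_tuple //].
  exists (fun _ => y); apply/seteqP; split => z; first by case=> _ _ <-.
  by move=> ->; exists (Ordinal n0).
have [t Ht] := choice H.
have tconst : forall x y i, f x = [set y] -> t x i = y.
  move=> x y i fxy; have : range (t x) (t x i) by exists i.
  by rewrite Ht fxy.
exists (fun x => sp_class (t x)); split.
- apply/continuousP => A oA; rewrite openE => x Ax.
  have oO : open ([set z : Ypow n Y | A (sp_class z)]) by exact: oA.
  have [r0 r00 r0O] := ptws_ball oO Ax.
  rewrite /interior.
  have [[y fxy]|nsing] := pselect (exists y, f x = [set y]).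
    pose V := (ball y r0)°.
    have oV : open V by exact: open_interior.
    have Vy : V y by apply: nbhs_singleton; apply: nbhs_interior; apply/nbhs_ballP; exists r0.
    have : nbhs x [set x' | f x' `<=` V].
      apply: open_nbhs_nbhs; split; first exact: usc.
      by rewrite /= fxy => _ ->.
    apply: filterS => x' fx'V; apply: r0O => i /=.
    rewrite (tconst x y i fxy).
    apply: interior_subset; apply: fx'V; rewrite -Ht; by exists i.
  have fxn : f x #= `I_n.
    case: (fcard x) => // /card1_single [y fxy]; by exfalso; apply: nsing; exists y.
  have tinj : injective (t x) by apply: card_range_inj; rewrite Ht.
  have : \forall r \near (0:R)^'+, [/\ 0 < r, r < r0 &
       forall ij : 'I_n * 'I_n, ij.1 != ij.2 -> r + r <= mdist (t x ij.1) (t x ij.2)].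
    near=> r; split.
    - near: r; exact: nbhs_right_gt.
    - near: r; exact: nbhs_right_lt.
    - near: r; apply: filter_forall => ij.
      case: eqVneq => [_|ne]; first by apply: nearW.
      have d0 : 0 < mdist (t x ij.1) (t x ij.2) / 2.
        by rewrite divr_gt0 // mdist_gt0 (inj_eq tinj).
      apply: filterS (nbhs_right_lt d0) => r rd _.
      rewrite [leRHS](@splitr R); rewrite lerD // ltW //.
  move=> /filter_ex [r [r_gt0 rr0 rd]].
  pose V i := (ball (t x i) r)°.
  have : \forall x' \near x, forall i, (f x' `&` V i !=set0).
    apply: filter_forall => i; apply: open_nbhs_nbhs; split.
      by apply: lsc; exact: open_interior.
    exists (t x i); split; first by rewrite -Ht; exists i.
    by apply: nbhs_singleton; apply: nbhs_interior; apply/nbhs_ballP; exists r.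
  apply: filterS => x' Hx'.
  have Hs : forall i, exists j, ball (t x i) r (t x' j).
    move=> i; have [z [fz Vz]] := Hx' i.
    move: fz; rewrite -Ht => -[j _ tj]; exists j; rewrite tj.
    exact: interior_subset.
  have [s Hss] := choice Hs.
  have sinj : injective s.
    move=> i i' sii; apply/eqP; apply: contraT => ne.
    have h2 := ball_sym (Hss i'); rewrite -sii in h2.
    have := ball_triangle (Hss i) h2.
    rewrite ballEmdist /= ltNge.
    by have := rd (i, i') ne => /= ->.
  have e : sp_class (t x') = sp_class (fun i => t x' (s i)).
    apply: esym; apply: sp_class_eq.
    exact: (@inj_perm_rel _ _ _ _ _ s).
  rewrite /= e; apply: r0O => i; apply: (le_ball (ltW rr0)); exact: Hss.
- by move=> x; rewrite u_map_sp Ht.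
- move=> x y fxy; congr sp_class; apply: funext => i; exact: tconst.
- move=> x y fxn fxy; apply: sp_class_eq; apply: range_perm; last by rewrite Ht.
  by apply: card_range_inj; rewrite Ht.
Unshelve. all: by end_near.
Qed.
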